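(* Let $n,s,t$ be positive integers with $1\le s\le t\le n$, and let $u_1,\dots,u_l,v_1,\dots,v_l$ be positive integers with $\prod_{i=1}^{l}v_i=s$, $u_1=s/v_1$ and $u_i=u_{i-1}/v_i$ for $2\le i\le l$. Then $$r(n;s,t)\ \le\ s\left(\prod_{i=1}^{l}S(n,u_i,v_i)\right) r(n;1,t).$$
   Context: $[m]=\{1,\dots,m\}$. A linear code $\mathcal{C}\subseteq\mathbb{F}^N$ of dimension $n$ is systematic if for every $\mathbf{x}\in\mathbb{F}^n$ there is a unique codeword whose first $n$ coordinates equal $\mathbf{x}$. A set $R\subseteq[N]$ is a recovering set for $i\in[n]$ if there are scalars $\lambda_k$ with $\mathbf{c}(i)=\sum_{k\in R}\lambda_k\mathbf{c}(k)$ for all $\mathbf{c}\in\mathcal{C}$. $(s,t)$-batch code ($1\le s\le t$): a systematic linear code of dimension $n$ such that for every choice of indices $i_1,\dots,i_s\in[n]$ (not necessarily distinct) and nonnegative integers $a_1,\dots,a_s$ with $\sum_j a_j=t$, there exist $t$ pairwise disjoint sets $R_{j,l}\subseteq[N]$ ($j\in[s]$, $l\in[a_j]$), each a recovering set for $i_j$. Redundancy is $N-n$; $r(n;s,t)$ is the minimum redundancy of an $(s,t)$-batch code of dimension $n$ over all finite fields. A $v$-partition of $[n]$ is a partition of $[n]$ into $v$ (possibly empty) sets $P_1,\dots,P_v$; a $uv$-subset $I\subseteq[n]$ is covered by it if $|P_i\cap I|=u$ for all $i$; a collection of $v$-partitions is $u$-complete if every $uv$-subset of $[n]$ is covered by some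 member; $S(n,u,v)$ is the minimum cardinality of a $u$-complete collection of $v$-partitions of $[n]$. *)

(* Defs.v *)
From HB Require Import structures.
From mathcomp Require Import all_boot all_order all_algebra.
From Stdlib Require Import ClassicalEpsilon.
Set Implicit Arguments. Unset Strict Implicit. Unset Printing Implicit Defensive.
Import GRing.Theory.

(* Least natural number satisfying P (P m and P k -> m <= k), chosen
   classically; meaningful whenever P is nonempty. *)
Definition isMin (P : nat -> Prop) (m : nat) : Prop :=
  P m /\ forall k, P k -> (m <= k)%N.
Definition min_nat (P : nat -> Prop) : nat :=
  epsilon (inhabits 0%N) (isMin P).

Section BatchCodes.
Local Open Scope ring_scope.
Variables (F : fieldType) (n m : nat).
(* Codes of length N = n + m (so redundancy N - n = m); coordinates 'I_(n+m),
   the first n coordinates are lshift m i for i : 'I_n.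
   The code is the row space of C. *)
Implicit Type C : 'M[F]_(n + m).

Definition in_code C (c : 'rV[F]_(n + m)) : bool := (c <= C)%MS.

Definition code_dim C : nat := \rank C.

Definition systematic C : Prop :=
  forall x : 'rV[F]_n, exists! c : 'rV[F]_(n + m),
    in_code C c /\ forall i : 'I_n, c 0 (lshift m i) = x 0 i.

Definition recovering_set C (R : {set 'I_(n + m)}) (i : 'I_n) : Prop :=
  exists lambda : 'I_(n + m) -> F, forall c, in_code C c ->
    c 0 (lshift m i) = \sum_(k in R) lambda k * c 0 k.

Definition batch_code C (s t : nat) : Prop :=
  [/\ systematic C, code_dim C = n &
    forall (idx : 'I_s -> 'I_n) (a : 'I_s -> nat),
      \sum_(j < s) a j = t ->
      exists R : {j : 'I_s & 'I_(a j)} -> {set 'I_(n + m)},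
        (forall p q, p != q -> [disjoint R p & R q]) /\
        (forall p, recovering_set C (R p) (idx (tag p)))].
End BatchCodes.

Definition batch_achievable (n s t m : nat) : Prop :=
  exists (F : finFieldType) (C : 'M[F]_(n + m)), batch_code C s t.

Definition r_batch (n s t : nat) : nat := min_nat (batch_achievable n s t).

(* v-partitions of [n]: labelled by p : 'I_n -> 'I_v, P_k = p^-1(k) *)
Definition covers (n u v : nat) (p : {ffun 'I_n -> 'I_v}) (I : {set 'I_n}) : bool :=
  [forall k : 'I_v, #|[set x in I | p x == k]| == u].

Definition u_complete (n u v : nat) (Coll : {set {ffun 'I_n -> 'I_v}}) : Prop :=
  forall I : {set 'I_n}, #|I| = (u * v)%N -> exists2 p, p \in Coll & covers u p I.

Definition S_part (n u v : nat) : nat :=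
  min_nat (fun c => exists Coll : {set {ffun 'I_n -> 'I_v}}, u_complete u Coll /\ #|Coll| = c).

(* Main.v *)
Require Import Defs.
From mathcomp Require Import all_boot all_order all_algebra.
From mathcomp Require Import zify ring.
From Stdlib Require Import ClassicalEpsilon.
Set Implicit Arguments. Unset Strict Implicit. Unset Printing Implicit Defensive.
Import GRing.Theory.


Lemma min_nat_spec (P : nat -> Prop) k : P k ->
  P (min_nat P) /\ forall j, P j -> (min_nat P <= j)%N.
Proof.
move=> Pk.
pose b := fun j => if excluded_middle_informative (P j) then true else false.
have bP j : b j = true <-> P j.
  by rewrite /b; case: excluded_middle_informative.
have ex : exists j, b j by exists k; apply/bP.
have : exists m, isMin P m.
  case: (ex_minnP ex) => m /bP Pm mmin; exists m; split => // j /bP Pj.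
  exact: mmin.
move=> h; exact: (epsilon_spec (inhabits 0%N) (isMin P) h).
Qed.

Section Gen.
Local Open Scope ring_scope.
Variables (F : fieldType) (n m : nat).

Definition batch_gen (B : 'M[F]_(n, n + m)) (s t : nat) : Prop :=
  forall (idx : 'I_s -> 'I_n) (a : 'I_s -> nat),
    (\sum_(j < s) a j)%N = t ->
    exists R : {j : 'I_s & 'I_(a j)} -> {set 'I_(n + m)},
      (forall p q, p != q -> [disjoint R p & R q]) /\
      (forall p, exists lambda : 'I_(n + m) -> F, forall x : 'rV[F]_n,
         x 0 (idx (tag p)) = \sum_(k in R p) lambda k * (x *m B) 0 k).

Lemma encL (B : 'M[F]_(n, n + m)) (x : 'rV[F]_n) i :
  lsubmx B = 1%:M -> (x *m B) 0 (lshift m i) = x 0 i.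
Proof.
move=> hB.
have := congr1 (fun M : 'M[F]_(1, n) => M 0 i) (mulmx_lsub x B).
rewrite hB mulmx1 /= => h; rewrite h; by rewrite [RHS]mxE.
Qed.

Lemma gen_of_code (C : 'M[F]_(n + m)) s t : batch_code C s t ->
  exists B : 'M[F]_(n, n + m), lsubmx B = 1%:M /\ batch_gen B s t.
Proof.
case=> sys _ hb.
have : forall i : 'I_n, exists c : 'rV[F]_(n + m),
    in_code C c /\ forall j : 'I_n, c 0 (lshift m j) = (delta_mx 0 i : 'rV[F]_n) 0 j.
  by move=> i; case: (sys (delta_mx 0 i)) => c [hc _]; exists c.
case/fin_all_exists => c hc.
pose B := \matrix_(i < n) c i.
have hBC : (B <= C)%MS.
  by apply/row_subP => i; rewrite rowK; case: (hc i).
have hL : lsubmx B = 1%:M.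
  apply/matrixP => i j; rewrite !mxE (proj2 (hc i)) !mxE eqxx /=.
  by rewrite eq_sym.
exists B; split => // idx a hs.
case: (hb idx a hs) => R [hd hr]; exists R; split => // p.
case: (hr p) => lam hl; exists lam => x.
rewrite -(encL x _ hL); apply: hl.
exact: submx_trans (submxMl x B) hBC.
Qed.

Lemma code_of_gen (B : 'M[F]_(n, n + m)) s t : lsubmx B = 1%:M ->
  batch_gen B s t -> batch_code (col_mx B (0 : 'M_(m, n + m))) s t.
Proof.
move=> hL hb.
have inC (c : 'rV[F]_(n + m)) : in_code (col_mx B 0) c -> c = (lsubmx c) *m B.
  rewrite /in_code => /submxP [y ->].
  rewrite -[y]hsubmxK mul_row_col mulmx0 addr0.
  congr (_ *m _); apply/rowP => i.
  by rewrite mxE -mulmx_lsub hL mulmx1 !mxE.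
have codeB (x : 'rV[F]_n) : in_code (col_mx B 0) (x *m B).
  rewrite /in_code; apply: submx_trans (submxMl x B) _.
  have {1}-> : B = row_mx (1%:M : 'M_n) (0 : 'M_(n, m)) *m col_mx B 0.
    by rewrite mul_row_col mul1mx mulmx0 addr0.
  exact: submxMl.
split.
- move=> x; exists (x *m B); split.
    by split => // i; rewrite encL.
  move=> c [hc hx]; rewrite (inC c hc); congr (_ *m _).
  by apply/rowP => i; rewrite mxE hx.
- rewrite /code_dim rank_col_mx0; apply/eqP; rewrite eqn_leq rank_leq_row /=.
  have e : (\rank (B *m col_mx 1%:M 0) = n)%N.
    by rewrite -[B]hsubmxK mul_row_col mulmx0 addr0 mulmx1 hL mxrank1.
  by rewrite -[X in (X <= _)%N]e; apply: mxrankM_maxl.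
- move=> idx a hs; case: (hb idx a hs) => R [hd hr]; exists R; split => // p.
  case: (hr p) => lam hl; exists lam => c hc.
  rewrite [in LHS](inC c hc) encL // hl -(inC c hc) //.
Qed.
End Gen.


Lemma disjP (T : finType) (A B : {set T}) :
  (forall x, x \in A -> x \in B -> False) -> [disjoint A & B].
Proof.
move=> h; rewrite -setI_eq0; apply/eqP/setP => x; rewrite !inE.
by apply/negP => /andP [xa xb]; apply: (h x).
Qed.

Lemma disjE (T : finType) (A B : {set T}) x :
  [disjoint A & B] -> x \in A -> x \in B -> False.
Proof. by move=> d xa xb; move: (disjointFr d xa); rewrite xb. Qed.

Lemma split_l n m (i : 'I_n) : split (lshift m i) = inl i.
Proof. exact: (unsplitK (inl i)). Qed.
Lemma split_r n m (i : 'I_m) : split (rshift n i) = inr i.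
Proof. exact: (unsplitK (inr i)). Qed.

Section Comb.
Local Open Scope ring_scope.
Variables (F : fieldType) (n m : nat) (Bk : finType) (M : Bk -> {set 'I_n})
  (B0 : 'M[F]_(n, n + m)).
Hypothesis hB0 : lsubmx B0 = 1%:M.
Notation N := #|{: Bk * 'I_m}|.

Definition combB : 'M[F]_(n, n + N) := \matrix_(i, j)
  match split j with
  | inl i' => (i == i')%:R
  | inr x => (i \in M (enum_val x).1)%:R * B0 i (rshift n (enum_val x).2)
  end.

Definition phi b (k : 'I_(n + m)) : 'I_(n + N) :=
  match split k with inl i => lshift N i | inr r => rshift n (enum_rank (b, r)) end.
Definition keep b (k : 'I_(n + m)) : bool :=
  match split k with inl i => i \in M b | inr _ => true end.
Definition liftS b (R0 : {set 'I_(n + m)}) : {set 'I_(n + N)} :=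
  [set phi b k | k in [set k in R0 | keep b k]].
Definition lam' (lam : 'I_(n + m) -> F) (j : 'I_(n + N)) : F :=
  match split j with inl i => lam (lshift m i) | inr x => lam (rshift n (enum_val x).2) end.
Definition mask b (x : 'rV[F]_n) : 'rV[F]_n := \row_i (if i \in M b then x 0 i else 0).

Lemma combL : lsubmx combB = 1%:M.
Proof. by apply/matrixP => i j; rewrite !mxE split_l. Qed.

Lemma phiL b i : phi b (lshift m i) = lshift N i.
Proof. by rewrite /phi split_l. Qed.
Lemma phiR b r : phi b (rshift n r) = rshift n (enum_rank (b, r)).
Proof. by rewrite /phi split_r. Qed.

Lemma phi_inj b : injective (phi b).
Proof.
move=> k1 k2.
case: (split_ordP k1) => [i1 ->|r1 ->]; case: (split_ordP k2) => [i2 ->|r2 ->];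
  rewrite ?phiL ?phiR => /eqP; rewrite ?eq_lshift ?eq_rshift ?eq_lrshift ?eq_rlshift //.
- by move/eqP->.
- by move/eqP/enum_rank_inj => [->].
Qed.

Lemma lam'_phi lam b k : lam' lam (phi b k) = lam k.
Proof.
case: (split_ordP k) => [i ->|r ->]; rewrite ?phiL ?phiR /lam' ?split_l ?split_r //.
by rewrite enum_rankK.
Qed.

Lemma val_phi b x k : keep b k -> (x *m combB) 0 (phi b k) = (mask b x *m B0) 0 k.
Proof.
case: (split_ordP k) => [i ->|r ->]; rewrite /keep ?split_l ?split_r => kp.
- by rewrite phiL encL ?combL // encL // mxE kp.
- rewrite phiR !mxE; apply: eq_bigr => j _.
  rewrite !mxE split_r enum_rankK /=.
  by case: (j \in M b); rewrite ?mul1r ?mul0r ?mulr0 ?mulr1.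
Qed.

Lemma val_nokeep b x k : ~~ keep b k -> (mask b x *m B0) 0 k = 0.
Proof.
case: (split_ordP k) => [i ->|r ->]; rewrite /keep ?split_l ?split_r // => /negbTE kp.
by rewrite encL // mxE kp.
Qed.

Lemma lift_rec b (R0 : {set 'I_(n + m)}) i lam : i \in M b ->
  (forall y : 'rV[F]_n, y 0 i = \sum_(k in R0) lam k * (y *m B0) 0 k) ->
  forall x : 'rV[F]_n, x 0 i = \sum_(j in liftS b R0) lam' lam j * (x *m combB) 0 j.
Proof.
move=> iM h x.
have := h (mask b x); rewrite mxE iM => ->.
rewrite /liftS big_imset; last by move=> ? ? _ _; apply: phi_inj.
rewrite (bigID (keep b)) /= [X in _ + X]big1 ?addr0; last first.
  by move=> k /andP [_ kp]; rewrite val_nokeep // mulr0.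
apply: eq_big => [k|k /andP [_ kp]]; first by rewrite inE.
by rewrite lam'_phi val_phi.
Qed.

Lemma liftD1 b (R0 R1 : {set 'I_(n + m)}) : [disjoint R0 & R1] -> [disjoint liftS b R0 & liftS b R1].
Proof.
move=> d; apply: disjP => x /imsetP [k1 h1 ->] /imsetP [k2 h2 /phi_inj e].
move: h1 h2; rewrite !inE -e => /andP [k1R0 _] /andP [k1R1 _].
exact: (disjE d k1R0 k1R1).
Qed.

Lemma liftD2 b b' (R0 R1 : {set 'I_(n + m)}) : b != b' ->
  (forall i, lshift m i \in R0 -> i \in M b -> lshift m i \in R1 -> i \in M b' -> False) ->
  [disjoint liftS b R0 & liftS b' R1].
Proof.
move=> bb h; apply: disjP => x /imsetP [k1 h1 ->] /imsetP [k2 h2].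
move: h1 h2; rewrite !inE.
case: (split_ordP k1) => [i1 ->|r1 ->]; case: (split_ordP k2) => [i2 ->|r2 ->];
  rewrite /keep ?split_l ?split_r ?phiL ?phiR => /andP [a1 c1] /andP [a2 c2] /eqP;
  rewrite ?eq_lshift ?eq_rshift ?eq_lrshift ?eq_rlshift //.
- by move/eqP => e; subst i2; exact: (h i1).
- by move/eqP/enum_rank_inj => [e _]; move: bb; rewrite e eqxx.
Qed.
End Comb.

Section Rep.
Local Open Scope ring_scope.

Lemma replic n t : exists m, batch_achievable n 1 t m.
Proof.
pose F := 'F_2.
pose B0 : 'M[F]_(n, n + n) := row_mx 1%:M 1%:M.
have hB0 : lsubmx B0 = 1%:M by rewrite row_mxKl.
pose M := fun _ : 'I_t.+1 => [set: 'I_n].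
exists #|{: 'I_t.+1 * 'I_n}|, F, (col_mx (combB M B0) 0).
apply: code_of_gen; first exact: combL.
move=> idx a hs.
have a0 : a ord0 = t by rewrite -hs big_ord1.
pose bb := fun p : {j : 'I_1 & 'I_(a j)} => (inord (tagged p) : 'I_t.+1).
exists (fun p => liftS M (bb p) [set rshift n (idx (tag p))]); split.
- move=> p q pq; apply: liftD2.
    apply: contra pq => /eqP e; apply/eqP.
    have hv : forall r : {j : 'I_1 & 'I_(a j)}, (tagged r < t.+1)%N.
      case=> j; rewrite [j]ord1 => l /=; rewrite -a0; exact: leqW (ltn_ord l).
    have := congr1 val e; rewrite /bb /= !inordK ?hv //.
    case: p {e} => j; rewrite [j]ord1 => l; case: q => j'; rewrite [j']ord1 => l' /= h.
    by congr Tagged; apply: val_inj.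
  by move=> i; rewrite inE eq_lrshift.
- move=> p; exists (lam' (fun _ => 1)); apply: (lift_rec hB0) => //; try by rewrite inE.
  move=> y; rewrite big_set1 mul1r /B0 mul_mx_row mulmx1.
  by rewrite row_mxEr.
Qed.

End Rep.


Lemma extend_set (T : finType) (A : {set T}) k : (#|A| <= k <= #|T|)%N ->
  exists B : {set T}, A \subset B /\ #|B| = k.
Proof.
move=> /andP [hA hk]; rewrite -(subnKC hA) in hk *.
elim: (k - #|A|)%N hk => [|d IH] hk; first by exists A; rewrite addn0.
have [|B [AB cB]] := IH; first lia.
have : (0 < #|~: B|)%N by have := cardsC B; lia.
case/card_gt0P => x; rewrite inE => xB; exists (x |: B); split.
  by apply: subset_trans AB (subsetUr _ _).
rewrite cardsU1 xB cB; lia.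
Qed.

Lemma card_sig (s : nat) (a : 'I_s -> nat) :
  #|{: {j : 'I_s & 'I_(a j)}}| = (\sum_(j < s) a j)%N.
Proof.
rewrite card_tagged sumnE big_map big_enum /=.
by apply: eq_bigr => j _; rewrite card_ord.
Qed.

Lemma card_part (T J : finType) (f : T -> J) (A : {set J}) :
  #|[set z | f z \in A]| = (\sum_(i in A) #|[set z | f z == i]|)%N.
Proof.
rewrite -sum1_card (partition_big f (mem A)) /=; last by move=> z; rewrite inE.
apply: eq_bigr => i iA; rewrite -sum1_card; apply: eq_bigl => z.
by rewrite !inE; case: eqP => [->|]; rewrite ?iA ?andbF.
Qed.

Section Step.
Local Open Scope ring_scope.
Variables (F : fieldType) (n m u v t : nat) (Coll : {set {ffun 'I_n -> 'I_v}}).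
Hypotheses (hu : (0 < u)%N) (hv : (0 < v)%N) (huv : (u * v <= n)%N)
  (hC : u_complete u Coll).
Variable B0 : 'M[F]_(n, n + m).
Hypothesis hB0 : lsubmx B0 = 1%:M.
Hypothesis hb0 : batch_gen B0 u t.

Definition MM (bk : 'I_#|Coll| * 'I_v) : {set 'I_n} :=
  [set i | (enum_val bk.1 : {ffun 'I_n -> 'I_v}) i == bk.2].

Lemma step_gen : batch_gen (combB MM B0) (u * v) t.
Proof.
move=> idx a hs.
pose T := {j : 'I_(u * v) & 'I_(a j)}.
have huv0 : (0 < u * v)%N by rewrite muln_gt0 hu hv.
pose i0 := idx (Ordinal huv0).
pose j0 : 'I_u := Ordinal hu.
pose I0 := [set idx j | j : 'I_(u * v)].
have [I [I0I cI]] : exists I : {set 'I_n}, I0 \subset I /\ #|I| = (u * v)%N.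
  apply: extend_set; rewrite card_ord huv andbT.
  by apply: leq_trans (leq_imset_card _ _) _; rewrite card_ord.
have inI (z : T) : idx (tag z) \in I.
  by apply: (subsetP I0I); apply: imset_f.
have [p pC cov] := hC cI.
pose q := enum_rank_in pC p.
have eq_q : enum_val q = p := enum_rankK_in pC pC.
pose Bs k := [set x in I | p x == k].
have cBs k : #|Bs k| = u by move/forallP: cov => /(_ k) /eqP.
pose S i := [set z : T | idx (tag z) == i].
pose W k := #|[set z : T | p (idx (tag z)) == k]|.
pose jj k i : 'I_u := insubd j0 (index i (enum (Bs k))).
pose idxk k (j' : 'I_u) := nth i0 (enum (Bs k)) j'.
have jjK k i : i \in Bs k -> idxk k (jj k i) = i.
  move=> iB.
  have hlt : (index i (enum (Bs k)) < u)%N by rewrite -(cBs k) cardE index_mem mem_enum.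
  by rewrite /idxk /jj insubdK ?nth_index ?mem_enum.
pose a' k (j' : 'I_u) := (#|S (idxk k j')| + (if j' == j0 then t - W k else 0))%N.
have WT k : (W k <= t)%N by rewrite -hs -card_sig; exact: max_card.
have sa' k : (\sum_(j' < u) a' k j')%N = t.
  rewrite big_split /=.
  have -> : (\sum_(j' < u) #|S (idxk k j')|)%N = W k.
    rewrite /W (_ : [set z : T | p (idx (tag z)) == k] = [set z : T | idx (tag z) \in Bs k]); last first.
      by apply/setP => z; rewrite !inE inI.
    rewrite (card_part (fun z : T => idx (tag z))).
    rewrite -(big_enum _ _ (Bs k)) (big_nth i0) -cardE cBs big_mkord.
    by [].
  rewrite (bigD1 j0) //= ?eqxx big1 ?addn0; first by have := WT k; lia.
  by move=> j /negbTE ->.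
have : forall k : 'I_v, exists Rk : {j' : 'I_u & 'I_(a' k j')} -> {set 'I_(n + m)},
    (forall p1 p2, p1 != p2 -> [disjoint Rk p1 & Rk p2]) /\
    (forall p1, exists lambda : 'I_(n + m) -> F, forall x : 'rV[F]_n,
       x 0 (idxk k (tag p1)) = \sum_(k0 in Rk p1) lambda k0 * (x *m B0) 0 k0).
  by move=> k; exact: (hb0 (idxk k) (sa' k)).
case/fin_all_exists => Rk hRk.
pose G k i l : {set 'I_(n + #|{: ('I_#|Coll| * 'I_v) * 'I_m}|)} :=
  match (insub l : option 'I_(a' k (jj k i))) with
  | Some l' => liftS MM (q, k) (Rk k (Tagged (fun j' => 'I_(a' k j')) l'))
  | None => set0 end.
have d0l (A : {set 'I_(n + #|{: ('I_#|Coll| * 'I_v) * 'I_m}|)}) : [disjoint set0 & A].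
  by apply: disjP => x; rewrite inE.
have d0r (A : {set 'I_(n + #|{: ('I_#|Coll| * 'I_v) * 'I_m}|)}) : [disjoint A & set0].
  by apply: disjP => x _; rewrite inE.
have hdis k i i' l l' : i \in Bs k -> i' \in Bs k -> (i != i') || (l != l') ->
    [disjoint G k i l & G k i' l'].
  move=> iB i'B hne; rewrite /G.
  case: insubP => [l1 _ e1|_]; case: insubP => [l2 _ e2|_] //.
  apply: liftD1; apply: (proj1 (hRk k)); apply/eqP => e.
  have e3 := congr1 (fun w : {j' : 'I_u & 'I_(a' k j')} => val (tagged w)) e.
  have e4 := congr1 (fun w : {j' : 'I_u & 'I_(a' k j')} => idxk k (tag w)) e.
  move: e3 e4 => /= e3 e4; rewrite !jjK // in e4.
  by move: hne; rewrite e4 eqxx /= -e1 -e2; move/eqP: e3 => ->.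
have hdis2 k1 k2 i i' l l' : k1 != k2 -> [disjoint G k1 i l & G k2 i' l'].
  move=> kk; rewrite /G.
  case: insubP => [l1 _ e1|_]; case: insubP => [l2 _ e2|_] //.
  apply: liftD2; first by rewrite xpair_eqE negb_and kk orbT.
  move=> j _; rewrite /MM !inE /= eq_q => /eqP -> _ /eqP e.
  by move: kk; rewrite e eqxx.
exists (fun z : T => G (p (idx (tag z))) (idx (tag z)) (index z (enum (S (idx (tag z)))))).
split.
- move=> z z' zz.
  case: (eqVneq (p (idx (tag z))) (p (idx (tag z')))) => e; last exact: hdis2.
  rewrite e; apply: hdis; rewrite ?inE ?inI ?e ?eqxx //.
  case: (eqVneq (idx (tag z)) (idx (tag z'))) => ii //=.
  apply/eqP => ei; move/eqP: zz; apply; rewrite ii in ei.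
  have zS : z \in enum (S (idx (tag z'))) by rewrite mem_enum inE ii.
  have z'S : z' \in enum (S (idx (tag z'))) by rewrite mem_enum inE.
  by rewrite -[LHS](nth_index z zS) ei nth_index.
- move=> z.
  set i := idx (tag z).
  have iB : i \in Bs (p i) by rewrite inE inI eqxx.
  have hlt : (index z (enum (S i)) < #|S i|)%N by rewrite cardE index_mem mem_enum inE.
  rewrite /G; case: insubP => [l' _ el|]; last first.
    rewrite /a' jjK // => /negP []; exact: leq_trans hlt (leq_addr _ _).
  have [lam hl] := proj2 (hRk (p i)) (Tagged (fun j' => 'I_(a' (p i) j')) l').
  exists (lam' lam); apply: (lift_rec hB0); first by rewrite /MM inE /= eq_q.
  by move=> y; move: (hl y) => /=; rewrite jjK.
Qed.
End Step.

Lemma step_ach (F : finFieldType) n m u v t (Coll : {set {ffun 'I_n -> 'I_v}})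
  (C : 'M[F]_(n + m)) : (0 < u)%N -> (0 < v)%N -> (u * v <= n)%N ->
  u_complete u Coll -> batch_code C u t ->
  batch_achievable n (u * v) t (#|Coll| * v * m).
Proof.
move=> hu hv huv hC hc.
have [B0 [hB0 hb0]] := gen_of_code hc.
have E : #|{: ('I_#|Coll| * 'I_v) * 'I_m}| = (#|Coll| * v * m)%N.
  by rewrite !card_prod !card_ord.
rewrite -E; exists F, (col_mx (combB (MM (Coll:=Coll)) B0) 0).
apply: code_of_gen; first exact: combL.
exact: step_gen.
Qed.

Lemma S_ne n u v : (0 < u)%N -> (0 < v)%N ->
  exists c, exists Coll : {set {ffun 'I_n -> 'I_v}}, u_complete u Coll /\ #|Coll| = c.
Proof.
move=> hu hv; exists #|[set: {ffun 'I_n -> 'I_v}]|, setT; split => //.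
move=> I cI.
have [x0 x0I] : exists x0, x0 \in I.
  by apply/card_gt0P; rewrite cI muln_gt0 hu hv.
have E : #|I| = #|{: 'I_u * 'I_v}| by rewrite cI card_prod !card_ord.
pose g x := enum_val (cast_ord E (enum_rank_in x0I x)).
pose h (y : 'I_u * 'I_v) : 'I_n := enum_val (cast_ord (esym E) (enum_rank y)).
have gK : {in I, cancel g h}.
  by move=> x xI; rewrite /g /h enum_valK cast_ordK enum_rankK_in.
have hK : cancel h g.
  by move=> y; rewrite /g /h enum_valK_in cast_ordKV enum_rankK.
have hI y : h y \in I by exact: enum_valP.
exists [ffun x => (g x).2]; first by rewrite inE.
apply/forallP => k; apply/eqP.
have -> : [set x in I | [ffun x => (g x).2] x == k] = [set h (a, k) | a : 'I_u].
  apply/setP => x; rewrite !inE ffunE; apply/andP/imsetP => [[xI /eqP gk]|[a _ ->]].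
    by exists (g x).1 => //; rewrite -gk -surjective_pairing gK.
  by split; [exact: hI | rewrite hK].
rewrite card_imset ?card_ord //.
by move=> a b /(congr1 g); rewrite !hK => [[]].
Qed.

Unset Implicit Arguments.

Theorem corollary1 (n s t l : nat) (u v : nat -> nat) :
  (1 <= s)%N -> (s <= t)%N -> (t <= n)%N -> (0 < l)%N ->
  (forall i, (1 <= i <= l)%N -> (0 < u i)%N /\ (0 < v i)%N) ->
  (\prod_(1 <= i < l.+1) v i)%N = s ->
  u 1%N = (s %/ v 1%N)%N ->
  (forall i, (2 <= i <= l)%N -> u i = (u i.-1 %/ v i)%N) ->
  (r_batch n s t <= s * (\prod_(1 <= i < l.+1) S_part n (u i) (v i)) * r_batch n 1 t)%N.
Proof.
move=> hs1 hst htn hl hpos hprod hu1 hurec.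
pose U j := (\prod_(j.+1 <= i < l.+1) v i)%N.
have Urec j : (1 <= j <= l)%N -> U j.-1 = (v j * U j)%N.
  move=> /andP [j1 jl]; rewrite /U prednK // big_ltn //.
have Uu j : (1 <= j <= l)%N -> u j = U j.
  elim: j => [//|j IH] /andP [_ jl].
  case: j IH jl => [_ _|j IH jl].
    rewrite hu1 -hprod -/(U 0) (Urec 1%N) ?hl // mulKn //.
    by case: (hpos 1%N); rewrite ?hl.
  rewrite hurec /=; last by lia.
  rewrite IH; last by lia.
  rewrite (Urec j.+2) /=; last by lia.
  rewrite mulKn //; by case: (hpos j.+2) => //; lia.
have Ul : U l = 1%N by rewrite /U big_geq.
have Ule j : (j <= l)%N -> (U j <= s)%N.
  elim: j => [_|j IH jl]; first by rewrite -hprod.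
  apply: leq_trans (IH (ltnW jl)).
  rewrite (Urec j.+1) /=; last by lia.
  by apply: leq_pmull; case: (hpos j.+1) => //; lia.
have [m1 a1] := replic n t.
have [ar1 _] := min_nat_spec a1.
pose r1 := r_batch n 1 t.
pose Sj i := S_part n (u i) (v i).
have claim : forall k, (k <= l)%N -> exists m, batch_achievable n (U (l - k)) t m /\
    (m <= U (l - k) * (\prod_((l - k).+1 <= i < l.+1) Sj i) * r1)%N.
  elim => [_|k IH kl].
    by rewrite subn0 Ul big_geq // mul1n; exists r1; split => //; rewrite mul1n.
  have [m [[F [C hC]] hm]] := IH (ltnW kl).
  have e : (l - k = (l - k.+1).+1)%N by lia.
  rewrite e in hC hm.
  set j := (l - k.+1)%N in hC hm *.
  have jl : (1 <= j.+1 <= l)%N by lia.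
  have [hu hv] := hpos _ jl.
  have [c hc] := S_ne n hu hv.
  have [[Coll [hColl cColl]] _] := @min_nat_spec (fun c => exists Coll : {set {ffun 'I_n -> 'I_(v j.+1)}},
     u_complete (u j.+1) Coll /\ #|Coll| = c) c hc.
  rewrite (Uu _ jl) in hColl.
  have hU : (0 < U j.+1)%N by rewrite -(Uu _ jl).
  have := step_ach hU hv _ hColl hC.
  rewrite -(Uu _ jl) in hU *.
  move=> /(_ _) ach.
  have huvn : (u j.+1 * v j.+1 <= n)%N.
    rewrite (Uu _ jl) mulnC -(Urec j.+1) //=; apply: leq_trans (Ule j _) _; lia.
  exists (#|Coll| * v j.+1 * m)%N; split.
    by rewrite -/(U j.+1.-1) (Urec j.+1) // mulnC -(Uu _ jl); apply: ach.
  rewrite -/(U j.+1.-1) (Urec j.+1) // big_ltn; last by lia.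
  rewrite cColl -/(Sj j.+1).
  apply: leq_trans (leq_mul (leqnn (Sj j.+1 * v j.+1)) hm) _.
  rewrite -(Uu _ jl).
  set P := (\prod_(_ <= _ < _) _)%N.
  by apply: eq_leq; ring.
have [m [am hm]] := claim l (leqnn l).
rewrite subnn in am hm.
have U0 : U 0 = s by [].
rewrite U0 in am hm.
have [_ hmin] := min_nat_spec am.
exact: leq_trans (hmin _ am) hm.
Qed.
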